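(* Let $k\ge1$. For all $0\le y_1\le y_2\le\dots\le y_{2k-1}\le1$ we have $\widetilde H_k(y_1,\dots,y_{2k-1})\le0$, where \[ \widetilde H_k(y_1,\dots,y_{2k-1}):=\sum_{i=0}^{k-1}(1-y_{k+i})\,y_{k+i+1}\cdots y_{2k-1}\;f_k(y_1)\cdots f_k(y_i)\;-\;\prod_{i=1}^{k}f_k(y_i), \] with empty products equal to $1$.
   Context: For an integer $k\ge1$, $f_k:[0,1]\to[0,1]$ denotes the unique decreasing function satisfying $f_k(x)^k-f_k(x)^{k+1}=x^k-x^{k+1}$ for all $x\in[0,1]$; it is continuous with $f_k(0)=1$, $f_k(1)=0$. *)

(* Defs.v *)
From Stdlib Require Import Reals Lra Lia.
Open Scope R_scope.

Fixpoint sumR (n : nat) (F : nat -> R) : R :=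
  match n with
  | O => 0
  | S n' => sumR n' F + F n'
  end.

Fixpoint prodR (a n : nat) (F : nat -> R) : R :=
  match n with
  | O => 1
  | S n' => prodR a n' F * F (a + n')%nat
  end.

Definition is_fk (k : nat) (f : R -> R) : Prop :=
  (forall x, 0 <= x <= 1 -> 0 <= f x <= 1) /\
  (forall x y, 0 <= x <= 1 -> 0 <= y <= 1 -> x < y -> f y < f x) /\
  (forall x, 0 <= x <= 1 -> f x ^ k - f x ^ (k + 1) = x ^ k - x ^ (k + 1)).

(* H~_k(y_1,...,y_{2k-1}) with y : nat -> R, using the indices 1..2k-1. *)
Definition Htilde (k : nat) (f : R -> R) (y : nat -> R) : R :=
  sumR k (fun i =>
      (1 - y (k + i)%nat)
      * prodR (k + i + 1) (k - 1 - i) y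
      * prodR 1 i (fun j => f (y j)))
  - prodR 1 k (fun j => f (y j)).

(* Main.v *)
Require Import Defs.
From Stdlib Require Import Reals Lra Lia Psatz.
Open Scope R_scope.

Lemma pow_lb (u v : R) (n : nat) : 0 <= u <= v ->
  INR n * u ^ (n - 1) * (v - u) <= v ^ n - u ^ n.
Proof.
  intros [Hu Huv]. induction n as [|n IH].
  - simpl. lra.
  - replace (S n - 1)%nat with n by lia.
    destruct n as [|n].
    + simpl. lra.
    + replace (S n - 1)%nat with n in IH by lia.
      rewrite !S_INR in *. cbn [pow] in *.
      assert (0 <= u ^ n) by (apply pow_le; lra).
      assert (0 <= INR n) by apply pos_INR.
      assert (v * (INR n * u^n * (v-u) + u^n*(v-u)) <= v * (v * v ^ n - u * u ^ n)) by
        (apply Rmult_le_compat_l; lra).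
      assert (u * ((INR n + 1) * u ^ n * (v - u)) <= v * ((INR n + 1) * u ^ n * (v - u))).
      { apply Rmult_le_compat_r; [|lra].
        apply Rmult_le_pos; [|lra]. apply Rmult_le_pos; lra. }
      nra.
Qed.

Lemma g_strict (k : nat) (u v : R) : (1 <= k)%nat -> 0 <= u -> u < v ->
  (INR k + 1) * v <= INR k ->
  u ^ k - u ^ (k + 1) < v ^ k - v ^ (k + 1).
Proof.
  intros Hk Hu Huv Hv.
  assert (Hk1 : 1 <= INR k) by (apply (le_INR 1); lia).
  rewrite !pow_add, !pow_1.
  destruct (Req_dec u 0) as [->|Hu0].
  - rewrite pow_i by lia.
    assert (0 < v ^ k) by (apply pow_lt; lra).
    assert (v < 1) by nra. nra.
  - assert (Hl := pow_lb u v k (conj Hu (Rlt_le _ _ Huv))).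
    destruct k as [|n]; [lia|].
    replace (S n - 1)%nat with n in Hl by lia.
    cbn [pow] in *.
    assert (0 < u ^ n) by (apply pow_lt; lra).
    assert (0 < INR (S n) * (1 - v) - u) by (rewrite S_INR in *; nra).
    assert (0 < (v - u) * u ^ n * (INR (S n) * (1 - v) - u)).
    { apply Rmult_lt_0_compat; [apply Rmult_lt_0_compat|]; lra. }
    assert (1 - v >= 0) by (rewrite S_INR in *; nra).
    assert ((INR (S n) * u ^ n * (v - u)) * (1-v) <= (v * v ^ n - u * u ^ n) * (1-v))
      by (apply Rmult_le_compat_r; lra).
    nra.
Qed.

Lemma fixpt (k : nat) (f : R -> R) (x : R) : (1 <= k)%nat -> is_fk k f ->
  0 <= x <= 1 -> f x = x -> INR k <= (INR k + 1) * x.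
Proof.
  intros Hk [Hr [Hd He]] Hx Hfx.
  destruct (Rle_or_lt (INR k) ((INR k + 1) * x)) as [H|H]; [exact H|exfalso].
  assert (Hk0 : 0 <= INR k) by apply pos_INR.
  set (t := INR k / (INR k + 1)).
  assert (Ht : (INR k + 1) * t = INR k) by (unfold t; field; lra).
  assert (Htx : x < t).
  { apply (Rmult_lt_reg_l (INR k + 1)); lra. }
  assert (Ht1 : t <= 1).
  { assert (Hp : (INR k + 1) * (1 - t) = 1) by lra.
    destruct (Rle_or_lt t 1) as [h|h]; [exact h|].
    assert ((INR k + 1) * (1 - t) < 0); [|lra].
    apply Rmult_pos_neg; lra. }
  set (s := (x + t) / 2).
  assert (Hs : 0 <= s <= 1) by (unfold s; lra).
  assert (Hfs := Hd x s Hx Hs ltac:(unfold s; lra)).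
  assert (Hfs0 := Hr s Hs).
  assert (Hs2 : (INR k + 1) * s <= INR k).
  { unfold s. assert ((INR k + 1) * x <= (INR k + 1) * t) by (apply Rmult_le_compat_l; lra).
    lra. }
  assert (Ha1 : 0 <= f s) by lra.
  assert (Ha2 : f s < s) by (unfold s in *; lra).
  pose proof (g_strict k (f s) s Hk Ha1 Ha2 Hs2) as Hg.
  rewrite (He s Hs) in Hg. lra.
Qed.

Fixpoint Dm (x : R) (a : nat -> R) (m : nat) : R :=
  match m with O => 1 | S m' => x * Dm x a m' - prodR 1 m' a * (1 - a (1 + m')%nat) end.
Fixpoint Sm (x : R) (a : nat -> R) (m : nat) : R :=
  match m with O => 0 | S m' => x * Sm x a m' + prodR 1 m' a end.
Fixpoint sm (x b : R) (m : nat) : R :=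
  match m with O => 0 | S m' => x * sm x b m' + b ^ m' end.

Lemma D_eq x a m : Dm x a m = prodR 1 m a - (1 - x) * Sm x a m.
Proof. induction m as [|m IH]; cbn [Dm Sm prodR]; [ring|]. rewrite IH. ring. Qed.

Lemma P_nonneg k a : (forall i, (1 <= i <= k)%nat -> 0 <= a i) ->
  forall m, (m <= k)%nat -> 0 <= prodR 1 m a.
Proof.
  intros Ha m. induction m as [|m IH]; intros Hm; cbn [prodR]; [lra|].
  apply Rmult_le_pos; [apply IH; lia| apply Ha; lia].
Qed.

Lemma sm_nonneg x b m : 0 <= x -> 0 <= b -> 0 <= sm x b m.
Proof.
  intros Hx Hb. induction m as [|m IH]; cbn [sm]; [lra|].
  assert (0 <= b ^ m) by (apply pow_le; lra).
  assert (0 <= x * sm x b m) by (apply Rmult_le_pos; lra). lra.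
Qed.

Lemma C_ineq k a x b : 0 <= x -> 0 <= b ->
  (forall i, (1 <= i <= k)%nat -> b <= a i) ->
  forall m, (m <= k)%nat -> b ^ m * Sm x a m <= prodR 1 m a * sm x b m.
Proof.
  intros Hx Hb Ha m. induction m as [|m IH]; intros Hm; cbn [Sm sm prodR pow]; [lra|].
  assert (HP : 0 <= prodR 1 m a) by (apply (P_nonneg k); [intros; specialize (Ha i H); lra| lia]).
  assert (Hs := sm_nonneg x b m Hx Hb).
  assert (Hbm : 0 <= b ^ m) by (apply pow_le; lra).
  assert (Hai := Ha (1 + m)%nat ltac:(lia)).
  specialize (IH ltac:(lia)).
  set (A := a (1 + m)%nat) in *. set (P := prodR 1 m a) in *.
  set (s := sm x b m) in *. set (S := Sm x a m) in *.
  assert (H1 : b * x * (b ^ m * S) <= b * x * (P * s)) by (apply Rmult_le_compat_l; nra).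
  assert (H2 : 0 <= (A - b) * x * (P * s)) by (apply Rmult_le_pos; [nra|nra]).
  assert (H3 : 0 <= (A - b) * (P * b ^ m)) by (apply Rmult_le_pos; nra).
  nra.
Qed.

Lemma e_closed x b m : (b - x) * (b ^ m - (1 - x) * sm x b m) = x ^ m * (1 - x) - b ^ m * (1 - b).
Proof.
  induction m as [|m IH]; cbn [sm pow]; [ring|].
  replace ((b - x) * (b * b ^ m - (1 - x) * (x * sm x b m + b ^ m)))
    with (x * ((b - x) * (b ^ m - (1 - x) * sm x b m)) + (b - x) * b ^ m * (b - 1)) by ring.
  rewrite IH. ring.
Qed.

Lemma sm_diag x m : x * sm x x m = INR m * x ^ m.
Proof.
  induction m as [|m IH]; cbn [sm pow]; [simpl; ring|].
  rewrite S_INR.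
  replace (x * (x * sm x x m + x ^ m)) with (x * (x * sm x x m) + x * x ^ m) by ring.
  rewrite IH. ring.
Qed.

Lemma e_nonneg k x b m : 0 <= x <= 1 -> 0 < b <= 1 ->
  b ^ k - b ^ (k + 1) = x ^ k - x ^ (k + 1) ->
  (b = x -> INR k <= (INR k + 1) * x) -> (m <= k)%nat ->
  0 <= b ^ m - (1 - x) * sm x b m.
Proof.
  intros Hx Hb Hg Hfix Hm.
  set (e := b ^ m - (1 - x) * sm x b m).
  destruct (Req_dec b x) as [Heq|Hne].
  - specialize (Hfix Heq). subst b.
    assert (Hxe : x * e = x ^ m * ((INR m + 1) * x - INR m)).
    { unfold e. rewrite Rmult_minus_distr_l.
      replace (x * ((1 - x) * sm x x m)) with ((1 - x) * (x * sm x x m)) by ring.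
      rewrite sm_diag. cbn [pow]. ring. }
    assert (Hmk : INR m <= INR k) by (apply le_INR; lia).
    assert (H0 : 0 <= (INR m + 1) * x - INR m) by nra.
    assert (0 <= x ^ m) by (apply pow_le; lra).
    assert (0 <= x * e) by (rewrite Hxe; apply Rmult_le_pos; lra).
    destruct (Rle_or_lt 0 e) as [h|h]; [exact h|]. nra.
  - destruct (Nat.le_exists_sub m k Hm) as [d [Hd _]]. subst k.
    rewrite !pow_add, pow_1 in Hg.
    assert (Hid : b ^ d * ((b - x) * e) = (1 - x) * x ^ m * (b ^ d - x ^ d)).
    { unfold e. rewrite e_closed.
      rewrite pow_1 in Hg. nra. }
    assert (Hbd : 0 < b ^ d) by (apply pow_lt; lra).
    assert (Hxm : 0 <= (1 - x) * x ^ m) by (apply Rmult_le_pos; [lra| apply pow_le; lra]).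
    destruct (Rle_or_lt 0 e) as [h|h]; [exact h| exfalso].
    destruct (Rlt_or_le b x) as [Hbx|Hbx].
    + assert (b ^ d <= x ^ d) by (apply pow_incr; lra).
      assert (0 < (b - x) * e) by nra.
      assert (0 < b ^ d * ((b - x) * e)) by (apply Rmult_lt_0_compat; lra).
      assert ((1 - x) * x ^ m * (b ^ d - x ^ d) <= 0) by
        (assert (0 <= (1 - x) * x ^ m * (x ^ d - b ^ d)) by (apply Rmult_le_pos; lra); lra).
      lra.
    + assert (Hbx' : x < b) by lra.
      assert (x ^ d <= b ^ d) by (apply pow_incr; lra).
      assert ((b - x) * e < 0) by nra.
      assert (b ^ d * ((b - x) * e) < 0) by (apply Rmult_pos_neg; lra).
      assert (0 <= (1 - x) * x ^ m * (b ^ d - x ^ d)) by (apply Rmult_le_pos; lra).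
      lra.
Qed.

Lemma D_nonneg k x b a m : 0 <= x <= 1 -> 0 <= b <= 1 -> (0 < b \/ x = 1) ->
  (forall i, (1 <= i <= k)%nat -> b <= a i) ->
  b ^ k - b ^ (k + 1) = x ^ k - x ^ (k + 1) ->
  (b = x -> INR k <= (INR k + 1) * x) -> (m <= k)%nat ->
  0 <= Dm x a m.
Proof.
  intros Hx Hb Hcase Ha Hg Hfix Hm.
  rewrite D_eq.
  assert (HP : 0 <= prodR 1 m a) by (apply (P_nonneg k); [intros; specialize (Ha i H); lra| lia]).
  destruct Hcase as [Hb0|Hx1].
  - assert (HC := C_ineq k a x b ltac:(lra) ltac:(lra) Ha m Hm).
    assert (He := e_nonneg k x b m Hx ltac:(lra) Hg Hfix Hm).
    assert (Hbm : 0 < b ^ m) by (apply pow_lt; lra).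
    assert (H1 : 0 <= prodR 1 m a * (b ^ m - (1 - x) * sm x b m)) by (apply Rmult_le_pos; lra).
    assert (H2 : (1 - x) * (b ^ m * Sm x a m) <= (1 - x) * (prodR 1 m a * sm x b m))
      by (apply Rmult_le_compat_l; lra).
    assert (H3 : 0 <= b ^ m * (prodR 1 m a - (1 - x) * Sm x a m)) by nra.
    destruct (Rle_or_lt 0 (prodR 1 m a - (1 - x) * Sm x a m)) as [h|h]; [exact h|].
    assert (b ^ m * (prodR 1 m a - (1 - x) * Sm x a m) < 0) by (apply Rmult_pos_neg; lra).
    lra.
  - subst x. lra.
Qed.

Lemma sumR_ext n F G : (forall i, (i < n)%nat -> F i = G i) -> sumR n F = sumR n G.
Proof.
  induction n as [|n IH]; intros H; cbn [sumR]; [reflexivity|].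
  rewrite IH by (intros; apply H; lia). rewrite H by lia. reflexivity.
Qed.

Lemma sumR_scal n c F : sumR n (fun i => c * F i) = c * sumR n F.
Proof. induction n as [|n IH]; cbn [sumR]; [ring|]. rewrite IH. ring. Qed.

Definition Gm k f y m := sumR m (fun i =>
  (1 - y (k + i)%nat) * prodR (k + i + 1) (m - 1 - i) y * prodR 1 i (fun j => f (y j))).

Lemma Htilde_G k f y : Htilde k f y = Gm k f y k - prodR 1 k (fun j => f (y j)).
Proof. reflexivity. Qed.

Lemma G_rec k f y m : Gm k f y (S m) =
  y (k + m)%nat * Gm k f y m + (1 - y (k + m)%nat) * prodR 1 m (fun j => f (y j)).
Proof.
  unfold Gm. cbn [sumR].
  replace (S m - 1 - m)%nat with 0%nat by lia. cbn [prodR].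
  rewrite <- sumR_scal.
  rewrite (sumR_ext m _ (fun i => y (k + m)%nat *
     ((1 - y (k + i)%nat) * prodR (k + i + 1) (m - 1 - i) y * prodR 1 i (fun j => f (y j))))).
  - ring.
  - intros i Hi. replace (S m - 1 - i)%nat with (S (m - 1 - i)) by lia.
    cbn [prodR]. replace (k + i + 1 + (m - 1 - i))%nat with (k + m)%nat by lia. ring.
Qed.

Theorem mainTheorem6 (k : nat) (f : R -> R) (y : nat -> R) :
  (1 <= k)%nat ->
  is_fk k f ->
  0 <= y 1%nat ->
  (forall i : nat, (1 <= i)%nat -> (i < 2 * k - 1)%nat -> y i <= y (S i)) ->
  y (2 * k - 1)%nat <= 1 ->
  Htilde k f y <= 0.
Proof.
  intros Hk Hfk Hy1 Hmon Hyend.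
  pose proof Hfk as [Hr [Hd He]].
  assert (Mono : forall i j, (1 <= i)%nat -> (i <= j)%nat -> (j <= 2 * k - 1)%nat -> y i <= y j).
  { intros i j Hi Hij Hj. induction j as [|j IH]; [lia|].
    destruct (Nat.eq_dec i (S j)) as [->|Hne]; [lra|].
    assert (y i <= y j) by (apply IH; lia).
    assert (y j <= y (S j)) by (apply Hmon; lia). lra. }
  assert (Yr : forall i, (1 <= i <= 2 * k - 1)%nat -> 0 <= y i <= 1).
  { intros i Hi. split.
    - apply Rle_trans with (y 1%nat); [lra| apply Mono; lia].
    - apply Rle_trans with (y (2 * k - 1)%nat); [apply Mono; lia| lra]. }
  set (x := y k). set (b := f x). set (a := fun j => f (y j)).
  assert (Hx : 0 <= x <= 1) by (apply Yr; lia).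
  assert (Hb : 0 <= b <= 1) by (apply Hr; exact Hx).
  assert (Ha : forall i, (1 <= i <= k)%nat -> b <= a i <= 1).
  { intros i Hi. unfold a, b. assert (Hyi := Yr i ltac:(lia)).
    split; [|apply Hr; exact Hyi].
    assert (y i <= x) by (apply Mono; lia).
    destruct (Req_dec (y i) x) as [->|Hne]; [lra|].
    apply Rlt_le, Hd; lra. }
  assert (Hg : b ^ k - b ^ (k + 1) = x ^ k - x ^ (k + 1)) by (apply He; exact Hx).
  assert (Hfix : b = x -> INR k <= (INR k + 1) * x) by (apply (fixpt k f x); assumption).
  assert (Hcase : 0 < b \/ x = 1).
  { destruct (Req_dec x 1) as [h|h]; [right; exact h|left].
    destruct (Rle_or_lt b 0) as [hb|hb]; [|exact hb]. exfalso.
    assert (Hb0 : b = 0) by lra.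
    destruct (Req_dec x 0) as [hx0|hx0].
    - assert (f 1 < f 0) by (apply Hd; lra).
      assert (0 <= f 1 <= 1) by (apply Hr; lra).
      unfold b in Hb0. rewrite hx0 in Hb0. lra.
    - rewrite Hb0, pow_add, pow_i in Hg by lia.
      rewrite pow_add, pow_1 in Hg.
      assert (0 < x ^ k) by (apply pow_lt; lra).
      assert (0 < x ^ k * (1 - x)) by (apply Rmult_lt_0_compat; lra).
      lra. }
  assert (Ha' : forall i, (1 <= i <= k)%nat -> b <= a i) by (intros i Hi; apply Ha; exact Hi).
  assert (Inv : forall m, (m <= k)%nat -> Dm x a m <= prodR 1 m a - Gm k f y m).
  { intros m. induction m as [|m IH]; intros Hm.
    - cbn [Dm prodR]. unfold Gm. cbn [sumR]. lra.
    - rewrite G_rec. cbn [Dm prodR].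
      specialize (IH ltac:(lia)).
      assert (HD : 0 <= Dm x a m) by (apply (D_nonneg k x b a m); auto; lia).
      assert (Hw : x <= y (k + m)%nat) by (unfold x; apply Mono; lia).
      assert (HP : prodR 1 m (fun j => f (y j)) = prodR 1 m a) by reflexivity.
      rewrite HP.
      assert (H1 : 0 <= (y (k + m)%nat - x) * Dm x a m) by (apply Rmult_le_pos; lra).
      assert (H2 : 0 <= y (k + m)%nat * (prodR 1 m a - Gm k f y m - Dm x a m))
        by (apply Rmult_le_pos; lra).
      nra. }
  rewrite Htilde_G.
  assert (HD : 0 <= Dm x a k) by (apply (D_nonneg k x b a k); auto).
  specialize (Inv k (le_n k)).
  change (prodR 1 k (fun j => f (y j))) with (prodR 1 k a). lra.
Qed.
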